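(* Let $f:T\to T'$ be a homomorphism of pre-trusses. If $P$ is a completely prime paragon in the pre-truss $\operatorname{im}f$, then $f^{-1}(P)$ is a completely prime paragon in $T$.
   Context: A heap is a set with a ternary operation $[-,-,-]$ satisfying $[a_1,a_2,[a_3,a_4,a_5]]=[[a_1,a_2,a_3],a_4,a_5]$ and $[a,a,b]=b=[b,a,a]$. A pre-truss is a heap with an associative multiplication; homomorphisms preserve both operations, and images are pre-trusses. A normal sub-heap is a non-empty subset $S$ closed under $[-,-,-]$ with $[[a,e,s],a,e]\in S$ for all $a$ and $e,s\in S$; $a\sim_S b$ iff $[a,b,s]\in S$ for some (equivalently all) $s\in S$. A sub-heap $S$ is closed if $[ts',ts,s]\in S$ and $[s't,st,s]\in S$ for all $s,s'\in S$, $t$. A paragon is a non-empty normal sub-heap $P$ all of whose $\sim_P$-classes are closed. An ideal is a normal sub-heap $I$ with $ti,it\in I$ for all $t$, $i\in I$. For $p\in P$, $a$ in the pre-truss, $P_p^a=\{[q,p,a]\mid q\in P\}$. A non-empty paragon $P$ of a pre-truss $X$ is completely prime if for all $p\in P$ and $a,b,c\in X$: $[ab,ac,p]\in P$ implies that $P_p^a$ is an ideal or $[b,c,p]\in P$; and $[ba,ca,p]\in P$ implies that $P_p^a$ is an ideal or $[b,c,p]\in P$. *)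

(* Defs.v *)
From Stdlib Require Import ProofIrrelevance.

Set Implicit Arguments.

Record preTruss := PreTruss {
  car :> Type;
  tern : car -> car -> car -> car;
  mul : car -> car -> car;
  tern_assoc : forall a1 a2 a3 a4 a5,
      tern a1 a2 (tern a3 a4 a5) = tern (tern a1 a2 a3) a4 a5;
  tern_idl : forall a b, tern a a b = b;
  tern_idr : forall a b, tern b a a = b;
  mul_assoc : forall a b c, mul a (mul b c) = mul (mul a b) c
}.

Arguments tern {p}.
Arguments mul {p}.

Definition is_hom (T T' : preTruss) (f : T -> T') : Prop :=
  (forall a b c, f (tern a b c) = tern (f a) (f b) (f c)) /\
  (forall a b, f (mul a b) = mul (f a) (f b)).

Section Image.
Variables (T T' : preTruss) (f : T -> T') (hf : @is_hom T T' f).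

Definition im_car := { y : T' | exists x, f x = y }.

Definition im_tern (u v w : im_car) : im_car.
Proof.
  refine (exist _ (tern (proj1_sig u) (proj1_sig v) (proj1_sig w)) _).
  destruct u as [y1 [x1 h1]], v as [y2 [x2 h2]], w as [y3 [x3 h3]]; simpl.
  exists (tern x1 x2 x3). rewrite (proj1 hf). subst. reflexivity.
Defined.

Definition im_mul (u v : im_car) : im_car.
Proof.
  refine (exist _ (mul (proj1_sig u) (proj1_sig v)) _).
  destruct u as [y1 [x1 h1]], v as [y2 [x2 h2]]; simpl.
  exists (mul x1 x2). rewrite (proj2 hf). subst. reflexivity.
Defined.

Lemma im_eq (u v : im_car) : proj1_sig u = proj1_sig v -> u = v.
Proof.
  destruct u as [y hy], v as [z hz]; simpl; intros e; subst.
  f_equal; apply proof_irrelevance.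
Qed.

Lemma im_tern_assoc : forall a1 a2 a3 a4 a5,
  im_tern a1 a2 (im_tern a3 a4 a5) = im_tern (im_tern a1 a2 a3) a4 a5.
Proof. intros; apply im_eq; simpl; apply tern_assoc. Qed.

Lemma im_tern_idl : forall a b, im_tern a a b = b.
Proof. intros; apply im_eq; simpl; apply tern_idl. Qed.

Lemma im_tern_idr : forall a b, im_tern b a a = b.
Proof. intros; apply im_eq; simpl; apply tern_idr. Qed.

Lemma im_mul_assoc : forall a b c, im_mul a (im_mul b c) = im_mul (im_mul a b) c.
Proof. intros; apply im_eq; simpl; apply mul_assoc. Qed.

Definition im_truss : preTruss :=
  @PreTruss im_car im_tern im_mul im_tern_assoc im_tern_idl im_tern_idr im_mul_assoc.

Definition to_im (x : T) : im_truss := exist _ (f x) (ex_intro _ x eq_refl).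

End Image.

Section Notions.
Variable X : preTruss.

Definition subheap (S : X -> Prop) : Prop :=
  forall a b c, S a -> S b -> S c -> S (tern a b c).

Definition normal_subheap (S : X -> Prop) : Prop :=
  (exists s, S s) /\ subheap S /\
  (forall a e s, S e -> S s -> S (tern (tern a e s) a e)).

Definition simS (S : X -> Prop) (a b : X) : Prop :=
  exists s, S s /\ S (tern a b s).

Definition closed_subheap (S : X -> Prop) : Prop :=
  subheap S /\
  forall s s' t, S s -> S s' ->
    S (tern (mul t s') (mul t s) s) /\ S (tern (mul s' t) (mul s t) s).

Definition paragon (P : X -> Prop) : Prop :=
  normal_subheap P /\ forall a, closed_subheap (simS P a).

Definition ideal (I : X -> Prop) : Prop :=
  normal_subheap I /\ forall t i, I i -> I (mul t i) /\ I (mul i t).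

Definition Ppa (P : X -> Prop) (p a : X) : X -> Prop :=
  fun x => exists q, P q /\ x = tern q p a.

Definition completely_prime (P : X -> Prop) : Prop :=
  (exists p, P p) /\ paragon P /\
  forall p a b c, P p ->
    (P (tern (mul a b) (mul a c) p) -> ideal (Ppa P p a) \/ P (tern b c p)) /\
    (P (tern (mul b a) (mul c a) p) -> ideal (Ppa P p a) \/ P (tern b c p)).

End Notions.

Arguments subheap {X}. Arguments normal_subheap {X}. Arguments simS {X}.
Arguments closed_subheap {X}. Arguments paragon {X}. Arguments ideal {X}.
Arguments Ppa {X}. Arguments completely_prime {X}.

(* Main.v *)
Require Import Defs.
From Stdlib Require Import Setoid.

Section Pre.
Variables (X Y : preTruss) (g : X -> Y).
Hypothesis gt : forall a b c, g (tern a b c) = tern (g a) (g b) (g c).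
Hypothesis gm : forall a b, g (mul a b) = mul (g a) (g b).
Hypothesis gs : forall y, exists x, g x = y.

Lemma ext_subheap (S S' : X -> Prop) : (forall x, S x <-> S' x) -> subheap S -> subheap S'.
Proof. intros E H a b c. rewrite <- !E. apply H. Qed.

Lemma ext_normal (S S' : X -> Prop) : (forall x, S x <-> S' x) -> normal_subheap S -> normal_subheap S'.
Proof.
  intros E [[s Hs] [H1 H2]]. split; [exists s; apply E; auto|split].
  - eapply ext_subheap; eauto.
  - intros a e s0. rewrite <- !E. apply H2.
Qed.

Lemma ext_closed (S S' : X -> Prop) : (forall x, S x <-> S' x) -> closed_subheap S -> closed_subheap S'.
Proof.
  intros E [H1 H2]. split; [eapply ext_subheap; eauto|].
  intros s s' t. rewrite <- !E. apply H2.
Qed.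

Lemma ext_ideal (S S' : X -> Prop) : (forall x, S x <-> S' x) -> ideal S -> ideal S'.
Proof.
  intros E [H1 H2]. split; [eapply ext_normal; eauto|].
  intros t i. rewrite <- !E. apply H2.
Qed.

Lemma pre_subheap (S : Y -> Prop) : subheap S -> subheap (fun x => S (g x)).
Proof. intros H a b c ha hb hc. rewrite gt. apply H; auto. Qed.

Lemma pre_normal (S : Y -> Prop) : normal_subheap S -> normal_subheap (fun x => S (g x)).
Proof.
  intros [[s Hs] [H1 H2]]. split; [|split].
  - destruct (gs s) as [x hx]. exists x. rewrite hx. auto.
  - apply pre_subheap; auto.
  - intros a e s0 he hs. simpl. rewrite !gt. apply H2; auto.
Qed.

Lemma pre_closed (S : Y -> Prop) : closed_subheap S -> closed_subheap (fun x => S (g x)).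
Proof.
  intros [H1 H2]. split; [apply pre_subheap; auto|].
  intros s s' t hs hs'. simpl. rewrite !gt, !gm. apply H2; auto.
Qed.

Lemma pre_ideal (S : Y -> Prop) : ideal S -> ideal (fun x => S (g x)).
Proof.
  intros [H1 H2]. split; [apply pre_normal; auto|].
  intros t i hi. simpl. rewrite !gm. apply H2; auto.
Qed.

Lemma pre_simS (S : Y -> Prop) a x :
  simS (fun x => S (g x)) a x <-> simS S (g a) (g x).
Proof.
  split.
  - intros [s [h1 h2]]. exists (g s). rewrite <- gt. auto.
  - intros [s [h1 h2]]. destruct (gs s) as [s0 e]; subst.
    exists s0. simpl. rewrite gt. auto.
Qed.

Lemma Ppa_iff (Z : preTruss) (S : Z -> Prop) p a x : Ppa S p a x <-> S (tern x a p).
Proof.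
  split.
  - intros [q [hq e]]; subst. rewrite <- tern_assoc, tern_idl, tern_idr. auto.
  - intros h. exists (tern x a p). split; auto.
    rewrite <- tern_assoc, tern_idl, tern_idr. auto.
Qed.

Lemma pre_Ppa (S : Y -> Prop) p a x :
  Ppa (fun x => S (g x)) p a x <-> Ppa S (g p) (g a) (g x).
Proof. rewrite !Ppa_iff. rewrite gt. tauto. Qed.

Lemma pre_cp (P : Y -> Prop) : completely_prime P -> completely_prime (fun x => P (g x)).
Proof.
  intros [[p hp] [[HN HC] HP]]. split; [|split; [split|]].
  - destruct (gs p) as [x e]; subst. exists x; auto.
  - apply pre_normal; auto.
  - intros a. eapply ext_closed.
    + intros x. symmetry. apply pre_simS.
    + exact (pre_closed (fun y => simS P (g a) y) (HC (g a))).
  - intros p0 a b c hp0. simpl in hp0. destruct (HP (g p0) (g a) (g b) (g c) hp0) as [A B].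
    assert (I : ideal (Ppa P (g p0) (g a)) -> ideal (Ppa (fun x => P (g x)) p0 a)).
    { intros HI. eapply ext_ideal.
      - intros x. symmetry. apply pre_Ppa.
      - exact (pre_ideal (Ppa P (g p0) (g a)) HI). }
    split; intros h; simpl in h; rewrite !gt, !gm in h;
      [destruct (A h) | destruct (B h)]; auto; right; simpl; rewrite gt; auto.
Qed.
End Pre.

Theorem lemma4p13 (T T' : preTruss) (f : T -> T') (hf : @is_hom T T' f)
  (P : im_truss hf -> Prop) :
  completely_prime P ->
  completely_prime (fun x : T => P (to_im hf x)).
Proof.
  refine (@pre_cp T (im_truss hf) (to_im hf) _ _ _ P).
  - intros. apply im_eq. simpl. apply (proj1 hf).
  - intros. apply im_eq. simpl. apply (proj2 hf).
  - intros [y [x e]]. exists x. apply im_eq. simpl. auto.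
Qed.
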